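(* Consider selective layer fine-tuning in federated learning with one local step per epoch ($\tau=1$), run for $T$ epochs with learning rate $\eta>0$ from $\theta^0$. Assume: (i) ($\gamma$-smoothness) there is $\gamma>0$ with $\|\nabla f_i(\theta)-\nabla f_i(\theta')\|_2\le\gamma\|\theta-\theta'\|_2$ for all $\theta,\theta'$ and all $i\in\mathcal{N}$; (ii) (unbiased, bounded-variance stochastic gradients) for all $i$, $l$, $\theta$ and random mini-batches $\xi$, $\mathbb{E}[g_{i,l}(\theta;\xi)]=\nabla_l f_i(\theta)$, and there are $\sigma_l>0$ with $\|g_{i,l}(\theta;\xi)-\nabla_l f_i(\theta)\|^2\le\sigma_l^2$ for all $i$, and $\sum_{l\in\mathcal{L}_t}\sigma_l^2\le\sigma^2$ for all $t$; (iii) (gradient diversity) there are $\kappa_l>0$ with $\|\nabla_l f(\theta)-\nabla_l f_i(\theta)\|^2\le\kappa_l^2$ for all $i\in\mathcal{N}$, $l\in\mathcal{L}$ and all $\theta$. Let $C:=1-4\eta\gamma>0$. Then $$\min_{t\in[T]}\mathbb{E}\big[\|\nabla f(\theta^t)\|_2^2\big]\le\frac{2}{\eta CT}\big[f(\theta^0)-f(\theta^* )\big]+\frac{2\gamma\eta}{C}\sigma^2+\frac{1}{T}\sum_{t=1}^T\Big(\frac{1}{\gamma\eta C}+2\Big)\big(\mathcal{E}_{t,1}+\mathcal{E}_{t,2}\big),$$ where $\mathcal{E}_{t,1}=\mathbb{E}\big[\|\sum_{l\notin\mathcal{L}_t}\nabla_l f(\theta^t)\|^2\big]$ and $\mathcal{E}_{t,2}=\sum_{l\in\mathcal{L}_t}\chi_{\mathbf{w}_{t,l}\|\alpha}\kappa_l^2$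 with $\chi_{\mathbf{w}_{t,l}\|\alpha}=\sum_{i\in\mathcal{N}}\frac{(w_{i,l}^t-\alpha_i)^2}{\alpha_i}$.
   Context: There are $N$ clients $\mathcal{N}=\{1,\dots,N\}$; client $i$ has dataset $\mathcal{D}_i$ with $d_i>0$ samples, loss $F_i(\theta;\xi)$, local objective $f_i(\theta)=\frac1{d_i}\sum_{\xi\in\mathcal{D}_i}F_i(\theta;\xi)$; $\alpha_i=d_i/\sum_j d_j$ and the global objective is $f=\sum_i\alpha_i f_i$, which has a global minimizer $\theta^*$. The model $\theta\in\mathbb{R}^P$ is partitioned into $L$ layers indexed by $\mathcal{L}=\{1,\dots,L\}$; $\nabla_l F(\theta)$ denotes the gradient with respect to layer $l$'s parameters, viewed in $\mathbb{R}^P$ with zeros outside that block; $g_{i,l}(\theta;\xi)=\nabla_l F_i(\theta;\xi)$ is the stochastic layer gradient on mini-batch $\xi$. In each epoch $t$, a set $\mathcal{S}^t\subseteq\mathcal{N}$ of clients participates, each $i\in\mathcal{S}^t$ has a selected layer set $\mathcal{L}_i^t\subseteq\mathcal{L}$ (arbitrary, may vary with $i$ and $t$), and $\mathcal{L}_t=\bigcup_{i\in\mathcal{S}^t}\mathcal{L}_i^t$. Weights: $w_{i,l}^t=d_i/\sum_{j\in\mathcal{S}^t:\,l\in\mathcal{L}_j^t}d_j$ if $i\in\mathcal{S}^t$ and $l\in\mathcal{L}_i^t$, and $w_{i,l}^t=0$ otherwise (for every $i\in\mathcal{N}$). Update with $\tau=1$: each $i\in\mathcal{S}^t$ samples an independent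 mini-batch $\xi_i^t$, and $\theta^{t+1}=\theta^t-\eta\sum_{l\in\mathcal{L}_t}\sum_{i\in\mathcal{S}^t}w_{i,l}^t g_{i,l}(\theta^t;\xi_i^t)$. Expectations are over mini-batch sampling. *)

(* Defs.v *)
From HB Require Import structures.
From mathcomp Require Import all_boot all_order all_algebra.
From mathcomp Require Import boolp classical_sets reals topology normedtype derive.

Set Implicit Arguments.
Unset Strict Implicit.
Unset Printing Implicit Defensive.
Import Order.TTheory GRing.Theory Num.Theory.
Local Open Scope ring_scope.

Section FedDefs.
Variable R : realType.
Variables (P L N : nat).
Variable X : finType. (* type of mini-batches *)

Definition sqnorm (v : 'rV[R]_P) : R := \sum_(j < P) (v 0 j) ^+ 2.
Definition norm2 (v : 'rV[R]_P) : R := Num.sqrt (sqnorm v).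
Definition dotv (u v : 'rV[R]_P) : R := \sum_(j < P) u 0 j * v 0 j.

(* layer l block of a vector in R^P, zeros outside the block;
   [layer j] is the layer containing parameter coordinate j *)
Definition layer_mask (layer : 'I_P -> 'I_L) (l : 'I_L) (v : 'rV[R]_P) : 'rV[R]_P :=
  \row_j (if layer j == l then v 0 j else 0).

Definition alpha (d : 'I_N -> nat) (i : 'I_N) : R :=
  (d i)%:R / (\sum_(j < N) d j)%:R.

Definition fglob (d : 'I_N -> nat) (f : 'I_N -> 'rV[R]_P -> R) (th : 'rV[R]_P) : R :=
  \sum_(i < N) alpha d i * f i th.
Definition gradglob (d : 'I_N -> nat) (G : 'I_N -> 'rV[R]_P -> 'rV[R]_P)
  (th : 'rV[R]_P) : 'rV[R]_P :=
  \sum_(i < N) alpha d i *: G i th.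

Definition Lt (S : nat -> {set 'I_N}) (Ls : nat -> 'I_N -> {set 'I_L}) (t : nat)
  : {set 'I_L} := \bigcup_(i in S t) Ls t i.

Definition weight (d : 'I_N -> nat) (S : nat -> {set 'I_N})
  (Ls : nat -> 'I_N -> {set 'I_L}) (t : nat) (i : 'I_N) (l : 'I_L) : R :=
  if (i \in S t) && (l \in Ls t i)
  then (d i)%:R / (\sum_(j in S t | l \in Ls t j) d j)%:R
  else 0.

(* one epoch (tau = 1): xs i is the mini-batch sampled by client i,
   g i xi th is the full stochastic gradient nabla F_i(th; xi) *)
Definition step (layer : 'I_P -> 'I_L) (d : 'I_N -> nat) (S : nat -> {set 'I_N})
  (Ls : nat -> 'I_N -> {set 'I_L}) (g : 'I_N -> X -> 'rV[R]_P -> 'rV[R]_P)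
  (eta : R) (t : nat) (th : 'rV[R]_P) (xs : {ffun 'I_N -> X}) : 'rV[R]_P :=
  th - eta *: \sum_(l in Lt S Ls t) \sum_(i in S t)
                 weight d S Ls t i l *: layer_mask layer l (g i (xs i) th).

(* expectation over independent mini-batch sampling (client i samples
   with probability mass p i) of h(theta^{s+k}) started from theta^s = th *)
Fixpoint expect_from (layer : 'I_P -> 'I_L) (d : 'I_N -> nat) (S : nat -> {set 'I_N})
  (Ls : nat -> 'I_N -> {set 'I_L}) (g : 'I_N -> X -> 'rV[R]_P -> 'rV[R]_P)
  (p : 'I_N -> X -> R) (eta : R) (s k : nat) (h : 'rV[R]_P -> R) (th : 'rV[R]_P)
  : R :=
  match k with
  | 0 => h th
  | k'.+1 => \sum_(xs : {ffun 'I_N -> X}) (\prod_(i < N) p i (xs i)) *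
              expect_from layer d S Ls g p eta s.+1 k' h (step layer d S Ls g eta s th xs)
  end.

Definition expect_at layer d S Ls g p eta (th0 : 'rV[R]_P) (t : nat)
  (h : 'rV[R]_P -> R) : R :=
  expect_from layer d S Ls g p eta 0 t h th0.

Definition chi (d : 'I_N -> nat) (S : nat -> {set 'I_N})
  (Ls : nat -> 'I_N -> {set 'I_L}) (t : nat) (l : 'I_L) : R :=
  \sum_(i < N) (weight d S Ls t i l - alpha d i) ^+ 2 / alpha d i.

End FedDefs.

(* Main.v *)
Require Import Defs.
From HB Require Import structures.
From mathcomp Require Import all_boot all_order all_algebra.
From mathcomp Require Import boolp classical_sets reals topology normedtype derive.
From mathcomp Require Import ring lra.
Import Order.TTheory GRing.Theory Num.Theory.
Local Open Scope ring_scope.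
Set Implicit Arguments.
Unset Strict Implicit.
Lemma psi_derive (R : realType) P (f : 'rV[R]_P -> R) (x h : 'rV[R]_P) (s df : R) :
  is_derive (x + s *: h) h (f : _ -> R^o) df ->
  is_derive (s : R^o) (1 : R^o) ((fun r : R^o => f (x + r *: h)) : R^o -> R^o) df.
Proof.
move=> [D1 D2].
have E : (fun r : R => r^-1 *: (((fun r0 : R^o => f (x + r0 *: h) : R^o) \o shift s) (r *: (1:R^o)) - f (x + s *: h)))
   = (fun r : R => r^-1 *: (((f : _ -> R^o) \o shift (x + s *: h)) (r *: h) - f (x + s *: h))).
  apply/funext => r /=.
  have -> : x + (r *: (1:R^o) + s) *: h = r *: h + (x + s *: h).
    by rewrite [r *: (1:R^o)]/GRing.scale /= mulr1 scalerDl addrCA addrA.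
  by [].
split; rewrite /derivable /derive; first by rewrite E.
by rewrite E.
Qed.

Lemma quad_derive (R : realType) (c k r : R) :
  is_derive (r : R^o) (1 : R^o) ((fun s : R^o => s * c + s * s * k) : R^o -> R^o) (c + (r + r) * k).
Proof.
have H1 : is_derive (r : R^o) (1 : R^o) (@id R^o) 1 by exact: is_derive_id.
have H2 := is_deriveM H1 H1.
have H3 := is_deriveZ c H1.
have H4 := is_deriveZ k H2.
have H5 := is_deriveD H3 H4.
move: H5; set F := (X in is_derive _ _ X _) => H5.
have -> : ((fun s : R^o => s * c + s * s * k) : R^o -> R^o) = F.
  apply/funext => s; rewrite /F /=; change (s * c + s * s * k = c * s + k * (s * s)).
  by rewrite [c * s]mulrC [k * _]mulrC.
move: H5; set D := (c%:A + _) => H5.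
suff <- : D = c + (r+r)*k by [].
rewrite /D /GRing.scale /= !mulr1. lra.
Qed.

Lemma dotvDl (R : realType) P (u v w : 'rV[R]_P) : dotv (u + v) w = dotv u w + dotv v w.
Proof. by rewrite /dotv -big_split /=; apply: eq_bigr => j _; rewrite mxE mulrDl. Qed.

Lemma dotvNl (R : realType) P (u w : 'rV[R]_P) : dotv (- u) w = - dotv u w.
Proof. by rewrite /dotv -sumrN; apply: eq_bigr => j _; rewrite mxE mulNr. Qed.

Lemma sqnormZ (R : realType) P (c : R) (u : 'rV[R]_P) : sqnorm (c *: u) = c ^+ 2 * sqnorm u.
Proof. by rewrite /sqnorm mulr_sumr; apply: eq_bigr => j _; rewrite mxE exprMn. Qed.

Lemma dot_smooth (R : realType) P (u h : 'rV[R]_P) (k : R) : 0 < k ->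
  dotv u h <= sqnorm u / (2 * k) + k / 2 * sqnorm h.
Proof.
move=> k0; rewrite /dotv /sqnorm mulr_suml mulr_sumr -big_split /=.
apply: ler_sum => j _.
have : 0 <= (u 0 j - k * h 0 j) ^+ 2 by apply: sqr_ge0.
move=> H.
have E : u 0 j ^+ 2 / (2 * k) + k / 2 * h 0 j ^+ 2 - u 0 j * h 0 j = (u 0 j - k * h 0 j) ^+ 2 / (2 * k).
  field. lra.
rewrite -subr_ge0 E; apply: divr_ge0 => //; lra.
Qed.

Lemma descent1 (R : realType) P (f : 'rV[R]_P -> R) (G : 'rV[R]_P -> 'rV[R]_P) (gamma : R) :
  (forall th v, is_derive th v (f : _ -> R^o) (dotv (G th) v)) -> 0 < gamma ->
  (forall th th', sqnorm (G th - G th') <= gamma ^+ 2 * sqnorm (th - th')) ->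
  forall x h, f (x + h) <= f x + dotv (G x) h + gamma / 2 * sqnorm h.
Proof.
move=> fd g0 sm x h.
set c := dotv (G x) h; set k := gamma / 2 * sqnorm h.
pose phi := (fun r : R^o => f (x + r *: h) - (r * c + r * r * k)) : R^o -> R^o.
pose dphi := fun r : R => dotv (G (x + r *: h)) h - (c + (r + r) * k).
have Dphi : forall r, is_derive (r : R^o) (1 : R^o) phi (dphi r).
  move=> r; apply: is_deriveB; first exact: psi_derive.
  exact: quad_derive.
have [r rin E] := MVT (ltr01 : (0:R) < 1) (fun r _ => Dphi r)
  (derivable_within_continuous (i := `[(0:R), 1]) (fun r _ => (Dphi r).(ex_derive))).
have : dphi r <= 0.
  move: rin; rewrite in_itv /= => /andP[r0 r1].
  rewrite /dphi -[dotv (G (x + r *: h)) h](subrK (dotv (G x) h)) -dotvNl -dotvDl.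
  have := @dot_smooth _ _ (G (x + r *: h) + - G x) h _ (mulr_gt0 g0 r0).
  have := sm (x + r *: h) x; rewrite addrAC subrr add0r sqnormZ.
  move=> S1 S2.
  have S3 : sqnorm (G (x + r *: h) + - G x) / (2 * (gamma * r)) <= gamma ^+ 2 * (r ^+ 2 * sqnorm h) / (2 * (gamma * r)).
    apply: ler_wpM2r => //; rewrite invr_ge0; apply: mulr_ge0; [lra | apply: mulr_ge0; lra].
  have E2 : gamma ^+ 2 * (r ^+ 2 * sqnorm h) / (2 * (gamma * r)) = gamma * r / 2 * sqnorm h.
    field. apply/andP; split; apply/eqP; lra.
  rewrite /k /c; lra.
rewrite /phi /= in E.
rewrite scale0r addr0 scale1r mul0r mul1r !add0r subr0 mulr1 in E.
rewrite -/c -/k. lra.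
Qed.
Lemma sum_layer (R : realType) P L (lay : 'I_P -> 'I_L) (A : {set 'I_L}) (j : 'I_P) (F : 'I_L -> R) :
  \sum_(l in A) (if lay j == l then F l else 0) = if lay j \in A then F (lay j) else 0.
Proof.
case: ifP => jA.
  rewrite (bigD1 (lay j)) //= eqxx [X in _ + X]big1 ?addr0 // => l /andP[_ neq].
  by rewrite eq_sym (negPf neq).
by rewrite big1 // => l lA; case: eqP => // E; rewrite E lA in jA.
Qed.

Lemma mask_coord (R : realType) P L (lay : 'I_P -> 'I_L) l (v : 'rV[R]_P) j :
  layer_mask lay l v 0 j = if lay j == l then v 0 j else 0.
Proof. by rewrite mxE. Qed.

Lemma sum_mask_coord (R : realType) P L (lay : 'I_P -> 'I_L) (A : {set 'I_L}) (v : 'I_L -> 'rV[R]_P) j :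
  (\sum_(l in A) layer_mask lay l (v l)) 0 j = if lay j \in A then v (lay j) 0 j else 0.
Proof.
rewrite summxE -(sum_layer lay A j (fun l => v l 0 j)); apply: eq_bigr => l _.
by rewrite mask_coord.
Qed.

Lemma step_coord (R : realType) P L N (lay : 'I_P -> 'I_L) (A : {set 'I_L}) (S : {set 'I_N})
  (w : 'I_N -> 'I_L -> R) (y : 'I_N -> 'rV[R]_P) j :
  (\sum_(l in A) \sum_(i in S) w i l *: layer_mask lay l (y i)) 0 j
  = if lay j \in A then \sum_(i in S) w i (lay j) * y i 0 j else 0.
Proof.
rewrite summxE -(sum_layer lay A j (fun l => \sum_(i in S) w i l * y i 0 j)).
apply: eq_bigr => l _; rewrite summxE.
case: (lay j =P l) => [<-|ne]; first by apply: eq_bigr => i _; rewrite !mxE eqxx.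
by rewrite big1 // => i _; rewrite !mxE (introF eqP ne) mulr0.
Qed.

Lemma regroup (R : realType) P L (lay : 'I_P -> 'I_L) (A : {set 'I_L}) (F : 'I_L -> 'I_P -> R) :
  \sum_(j < P) (if lay j \in A then F (lay j) j else 0)
  = \sum_(l in A) \sum_(j < P) (if lay j == l then F l j else 0).
Proof.
rewrite exchange_big /=; apply: eq_bigr => j _.
by rewrite -(sum_layer lay A j (fun l => F l j)).
Qed.

Lemma sqnorm_mask (R : realType) P L (lay : 'I_P -> 'I_L) l (v : 'rV[R]_P) :
  sqnorm (layer_mask lay l v) = \sum_(j < P) (if lay j == l then v 0 j ^+ 2 else 0).
Proof. by apply: eq_bigr => j _; rewrite mask_coord; case: eqP => //; rewrite expr0n. Qed.

Lemma marginal (R : realType) N (X : finType) (p : 'I_N -> X -> R) (i0 : 'I_N) (F : X -> R) :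
  (forall i, \sum_(x : X) p i x = 1) ->
  \sum_(xs : {ffun 'I_N -> X}) (\prod_(i < N) p i (xs i)) * F (xs i0)
  = \sum_(x : X) p i0 x * F x.
Proof.
move=> p1.
have E : \sum_(x : X) p i0 x * F x
   = \prod_(i < N) \sum_(x : X) (if i == i0 then p i x * F x else p i x).
  rewrite (bigD1 i0) //= [X in _ * X]big1 ?mulr1.
    by apply: eq_bigr => x _; rewrite eqxx.
  by move=> i /negPf ->; rewrite p1.
rewrite E bigA_distr_bigA /=; apply: eq_bigr => xs _.
rewrite (bigD1 i0) //= [in RHS](bigD1 i0) //= eqxx mulrAC; congr (_ * _).
by apply: eq_bigr => i /negPf ->.
Qed.

Lemma pi_sum1 (R : realType) N (X : finType) (p : 'I_N -> X -> R) :
  (forall i, \sum_(x : X) p i x = 1) ->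
  \sum_(xs : {ffun 'I_N -> X}) \prod_(i < N) p i (xs i) = 1.
Proof.
move=> p1; rewrite -bigA_distr_bigA /= big1 // => i _; exact: p1.
Qed.

Lemma pi_pos (R : realType) N (X : finType) (p : 'I_N -> X -> R) (xs : {ffun 'I_N -> X}) :
  (forall i x, 0 <= p i x) -> \prod_(i < N) p i (xs i) != 0 -> forall i, 0 < p i (xs i).
Proof.
move=> p0 nz i; rewrite lt_def p0 andbT; apply: contraNneq nz => E.
by rewrite (bigD1 i) //= E mul0r.
Qed.

Lemma pi_ge0 (R : realType) N (X : finType) (p : 'I_N -> X -> R) (xs : {ffun 'I_N -> X}) :
  (forall i x, 0 <= p i x) -> 0 <= \prod_(i < N) p i (xs i).
Proof. by move=> p0; apply: prodr_ge0 => i _. Qed.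

Lemma wcs (R : realType) N (c a z : 'I_N -> R) :
  (forall i, 0 < a i) ->
  (\sum_i c i * z i) ^+ 2 <= (\sum_i c i ^+ 2 / a i) * (\sum_i a i * z i ^+ 2).
Proof.
move=> a0.
set A := \sum_i c i ^+ 2 / a i; set B := \sum_i a i * z i ^+ 2; set D := \sum_i c i * z i.
have A0 : 0 <= A by apply: sumr_ge0 => i _; apply: divr_ge0; [apply: sqr_ge0| apply: ltW].
have key : 0 <= \sum_i a i * (D * c i / a i - A * z i) ^+ 2.
  by apply: sumr_ge0 => i _; apply: mulr_ge0; [apply: ltW | apply: sqr_ge0].
have E : \sum_i a i * (D * c i / a i - A * z i) ^+ 2 = A * (A * B - D ^+ 2).
  have E1 : forall i, a i * (D * c i / a i - A * z i) ^+ 2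
     = D ^+ 2 * (c i ^+ 2 / a i) - 2 * D * A * (c i * z i) + A ^+ 2 * (a i * z i ^+ 2).
    move=> i; have := a0 i => ai; field; lra.
  rewrite (eq_bigr _ (fun i _ => E1 i)) big_split /= sumrB -!mulr_sumr -/A -/B -/D.
  ring.
rewrite E in key.
case: (ltP 0 A) => Ap.
  by rewrite -subr_ge0; rewrite pmulr_rge0 in key.
have A00 : A = 0 by apply/eqP; rewrite eq_le Ap A0.
have c0 : forall i, c i = 0.
  move=> i; have : c i ^+ 2 / a i <= A.
    rewrite /A (bigD1 i) //= lerDl; apply: sumr_ge0 => k _.
    by apply: divr_ge0; [apply: sqr_ge0| apply: ltW].
  rewrite A00 => H; have : c i ^+ 2 / a i == 0.
    by rewrite eq_le H divr_ge0 // ?sqr_ge0 // ltW.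
  rewrite mulf_eq0 invr_eq0 (gt_eqF (a0 i)) orbF sqrf_eq0 => /eqP //.
have -> : D = 0 by rewrite /D big1 // => i _; rewrite c0 mul0r.
rewrite expr0n /= A00 mul0r //.
Qed.

Lemma jensen (R : realType) N (S : {set 'I_N}) (w z : 'I_N -> R) :
  (forall i, 0 <= w i) -> \sum_(i in S) w i = 1 ->
  (\sum_(i in S) w i * z i) ^+ 2 <= \sum_(i in S) w i * z i ^+ 2.
Proof.
move=> w0 w1; set m := \sum_(i in S) w i * z i.
have key : 0 <= \sum_(i in S) w i * (z i - m) ^+ 2.
  by apply: sumr_ge0 => i _; apply: mulr_ge0 => //; apply: sqr_ge0.
have E1 : forall i, w i * (z i - m) ^+ 2 = w i * z i ^+ 2 - 2 * m * (w i * z i) + m ^+ 2 * w i.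
  move=> i; ring.
rewrite (eq_bigr _ (fun i _ => E1 i)) big_split /= sumrB -!mulr_sumr w1 -/m in key.
lra.
Qed.

Lemma sqnormE (R : realType) P (v : 'rV[R]_P) : sqnorm v = \sum_(j < P) v 0 j ^+ 2.
Proof. by []. Qed.

Lemma sqnorm_ge0 (R : realType) P (v : 'rV[R]_P) : 0 <= sqnorm v.
Proof. by apply: sumr_ge0 => j _; apply: sqr_ge0. Qed.

Lemma sqnorm_split2 (R : realType) P (a b : 'rV[R]_P) :
  sqnorm a <= 2 * sqnorm b + 2 * sqnorm (a - b).
Proof.
rewrite /sqnorm !mulr_sumr -big_split /=; apply: ler_sum => j _.
rewrite !mxE; set x := a 0 j; set y := b 0 j.
have := sqr_ge0 (x - 2 * y). nra.
Qed.

Lemma var_bound (R : realType) P L N (lay : 'I_P -> 'I_L) (A : {set 'I_L}) (S : {set 'I_N})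
  (w : 'I_N -> 'I_L -> R) (y z : 'I_N -> 'rV[R]_P) (s2 : 'I_L -> R) :
  (forall i l, 0 <= w i l) -> (forall l, l \in A -> \sum_(i in S) w i l = 1) ->
  (forall i l, i \in S -> sqnorm (layer_mask lay l (y i) - layer_mask lay l (z i)) <= s2 l) ->
  sqnorm ((\sum_(l in A) \sum_(i in S) w i l *: layer_mask lay l (y i))
          - (\sum_(l in A) \sum_(i in S) w i l *: layer_mask lay l (z i)))
  <= \sum_(l in A) s2 l.
Proof.
move=> w0 w1 hs.
rewrite sqnormE.
under eq_bigr => j _ do rewrite !mxE !step_coord.
apply: (@le_trans _ _ (\sum_(j < P) (if lay j \in A then
     \sum_(i in S) w i (lay j) * (y i 0 j - z i 0 j) ^+ 2 else 0))).
  apply: ler_sum => j _; case: ifP => jA; last by rewrite subrr expr0n.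
  rewrite -sumrB.
  under eq_bigr => i _ do rewrite -mulrBr.
  exact: jensen (w1 _ jA).
rewrite (regroup lay A (fun l j => \sum_(i in S) w i l * (y i 0 j - z i 0 j) ^+ 2)).
apply: ler_sum => l lA.
rewrite -(mulr1 (s2 l)) -(w1 l lA) mulr_sumr.
apply: (@le_trans _ _ (\sum_(i in S) w i l * sqnorm (layer_mask lay l (y i) - layer_mask lay l (z i)))).
  rewrite (eq_bigr (fun j => \sum_(i in S) (if lay j == l then w i l * (y i 0 j - z i 0 j) ^+ 2 else 0))); last first.
    by move=> j _; case: ifP => _ //; rewrite big1.
  rewrite exchange_big /=; apply: ler_sum => i iS.
  rewrite sqnormE mulr_sumr le_eqVlt; apply/orP; left; apply/eqP.
  apply: eq_bigr => j _; rewrite !mxE; case: eqP => _ //.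
  by rewrite subrr expr0n mulr0.
apply: ler_sum => i iS; rewrite mulrC; apply: ler_wpM2r => //; exact: hs.
Qed.

Lemma cs_bound (R : realType) P L N (lay : 'I_P -> 'I_L) (A : {set 'I_L}) (S : {set 'I_N})
  (w : 'I_N -> 'I_L -> R) (al : 'I_N -> R) (G : 'I_N -> 'rV[R]_P) (Gf : 'rV[R]_P) (ka : 'I_L -> R) :
  (forall i, 0 < al i) -> (forall l, l \in A -> \sum_i al i = 1) ->
  (forall l, l \in A -> \sum_(i in S) w i l = 1) ->
  (forall i l, i \notin S -> w i l = 0) ->
  Gf = \sum_i al i *: G i ->
  (forall i l, sqnorm (layer_mask lay l Gf - layer_mask lay l (G i)) <= ka l ^+ 2) ->
  \sum_(j < P) (if lay j \in A then
      ((\sum_(l in A) \sum_(i in S) w i l *: layer_mask lay l (G i)) 0 j - Gf 0 j) ^+ 2 else 0)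
  <= \sum_(l in A) (\sum_i (w i l - al i) ^+ 2 / al i) * ka l ^+ 2.
Proof.
move=> al0 al1 w1 wS GfE hk.
have wall : forall l, l \in A -> \sum_i w i l = 1.
  move=> l lA; rewrite -(w1 l lA) [RHS]big_mkcond /=; apply: eq_bigr => i _.
  by case: ifP => // /negbT /wS ->.
have Gfj : forall j, Gf 0 j = \sum_i al i * G i 0 j.
  by move=> j; rewrite GfE summxE; apply: eq_bigr => i _; rewrite mxE.
set chi := fun l => \sum_i (w i l - al i) ^+ 2 / al i.
have chi0 : forall l, 0 <= chi l.
  by move=> l; apply: sumr_ge0 => i _; apply: divr_ge0; [apply: sqr_ge0 | apply: ltW].
apply: (@le_trans _ _ (\sum_(j < P) (if lay j \in A then
     chi (lay j) * \sum_i al i * (G i 0 j - Gf 0 j) ^+ 2 else 0))).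
  apply: ler_sum => j _; rewrite step_coord; case: ifP => jA //.
  set l := lay j.
  have E : \sum_(i in S) w i l * G i 0 j - Gf 0 j
     = \sum_i (w i l - al i) * (G i 0 j - Gf 0 j).
    have E1 : \sum_(i in S) w i l * G i 0 j = \sum_i w i l * G i 0 j.
      rewrite big_mkcond /=; apply: eq_bigr => i _.
      by case: ifP => // /negbT /wS ->; rewrite mul0r.
    rewrite E1 Gfj.
    under [RHS]eq_bigr => i _ do rewrite mulrBl !mulrBr.
    rewrite !sumrB -!mulr_suml wall // (al1 _ jA) -Gfj; ring.
  rewrite jA E; exact: wcs.
rewrite (regroup lay A (fun l j => chi l * \sum_i al i * (G i 0 j - Gf 0 j) ^+ 2)).
apply: ler_sum => l lA.
rewrite (eq_bigr (fun j => chi l * (if lay j == l then \sum_i al i * (G i 0 j - Gf 0 j) ^+ 2 else 0))); last first.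
  by move=> j _; case: ifP; rewrite ?mulr0.
rewrite -mulr_sumr; apply: ler_wpM2l => //.
rewrite (eq_bigr (fun j => \sum_i al i * (if lay j == l then (G i 0 j - Gf 0 j) ^+ 2 else 0))); last first.
  by move=> j _; case: ifP => _ //; rewrite big1 // => i _; rewrite mulr0.
rewrite exchange_big /= -(mulr1 (ka l ^+ 2)) -(al1 l lA) mulr_sumr.
apply: ler_sum => i _; rewrite -mulr_sumr mulrC; apply: ler_wpM2r; first exact: ltW.
apply: le_trans (hk i l); rewrite le_eqVlt; apply/orP; left; apply/eqP.
rewrite sqnormE; apply: eq_bigr => j _; rewrite !mxE; case: eqP => _; last by rewrite subrr expr0n.
by rewrite -sqrrN opprB.
Qed.
Lemma E_le (R : realType) P L N (X : finType) (layer : 'I_P -> 'I_L) (d : 'I_N -> nat)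
  S Ls (g : 'I_N -> X -> 'rV[R]_P -> 'rV[R]_P) (p : 'I_N -> X -> R) eta
  (h1 h2 : 'rV[R]_P -> R) :
  (forall i x, 0 <= p i x) -> (forall th, h1 th <= h2 th) ->
  forall k s th, expect_from layer d S Ls g p eta s k h1 th <= expect_from layer d S Ls g p eta s k h2 th.
Proof.
move=> p0 hle; elim=> [|k IH] s th //=.
apply: ler_sum => xs _; apply: ler_wpM2l; last exact: IH.
by apply: prodr_ge0 => i _.
Qed.

Lemma E_add (R : realType) P L N (X : finType) (layer : 'I_P -> 'I_L) (d : 'I_N -> nat)
  S Ls (g : 'I_N -> X -> 'rV[R]_P -> 'rV[R]_P) (p : 'I_N -> X -> R) eta
  (h1 h2 : 'rV[R]_P -> R) k s th :
  expect_from layer d S Ls g p eta s k (fun th => h1 th + h2 th) th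
  = expect_from layer d S Ls g p eta s k h1 th + expect_from layer d S Ls g p eta s k h2 th.
Proof.
elim: k s th => [|k IH] s th //=.
by rewrite -big_split /=; apply: eq_bigr => xs _; rewrite IH mulrDr.
Qed.

Lemma E_scale (R : realType) P L N (X : finType) (layer : 'I_P -> 'I_L) (d : 'I_N -> nat)
  S Ls (g : 'I_N -> X -> 'rV[R]_P -> 'rV[R]_P) (p : 'I_N -> X -> R) eta
  (h : 'rV[R]_P -> R) (c : R) k s th :
  expect_from layer d S Ls g p eta s k (fun th => c * h th) th
  = c * expect_from layer d S Ls g p eta s k h th.
Proof.
elim: k s th => [|k IH] s th //=.
by rewrite mulr_sumr; apply: eq_bigr => xs _; rewrite IH mulrCA.
Qed.

Lemma E_const (R : realType) P L N (X : finType) (layer : 'I_P -> 'I_L) (d : 'I_N -> nat)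
  S Ls (g : 'I_N -> X -> 'rV[R]_P -> 'rV[R]_P) (p : 'I_N -> X -> R) eta (c : R) k s th :
  (forall i, \sum_(x : X) p i x = 1) ->
  expect_from layer d S Ls g p eta s k (fun _ => c) th = c.
Proof.
move=> p1; elim: k s th => [|k IH] s th //=.
rewrite (eq_bigr (fun xs : {ffun 'I_N -> X} => (\prod_(i < N) p i (xs i)) * c)); last by move=> xs _; rewrite IH.
rewrite -mulr_suml -bigA_distr_bigA /= big1 ?mul1r // => i _; exact: p1.
Qed.

Lemma E_succ (R : realType) P L N (X : finType) (layer : 'I_P -> 'I_L) (d : 'I_N -> nat)
  S Ls (g : 'I_N -> X -> 'rV[R]_P -> 'rV[R]_P) (p : 'I_N -> X -> R) eta
  (h : 'rV[R]_P -> R) k s th :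
  expect_from layer d S Ls g p eta s k.+1 h th
  = expect_from layer d S Ls g p eta s k
      (fun th' => \sum_(xs : {ffun 'I_N -> X}) (\prod_(i < N) p i (xs i)) *
                   h (step layer d S Ls g eta (s + k) th' xs)) th.
Proof.
elim: k s th => [|k IH] s th.
  by rewrite /= addn0; apply: eq_bigr.
have U : forall k' F th, expect_from layer d S Ls g p eta s k'.+1 F th =
  \sum_(xs : {ffun 'I_N -> X}) (\prod_(i < N) p i (xs i)) *
     expect_from layer d S Ls g p eta s.+1 k' F (step layer d S Ls g eta s th xs) by [].
rewrite !U; apply: eq_bigr => xs _; rewrite IH.
by rewrite addSnnS.
Qed.
Lemma final_arith (R : realType) (eta gamma sigma Ain B Eq E2 F0 F1 : R) :
  0 < eta -> 0 < gamma -> 0 < 1 - 4 * eta * gamma -> 0 <= B -> 0 <= Eq -> Eq <= E2 ->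
  F1 <= F0 - eta * (1 - 4 * eta * gamma) / 2 * Ain + eta / 2 * (1 + 4 * gamma * eta) * Eq
        + gamma * eta ^+ 2 * sigma ^+ 2 ->
  Ain + B <= 2 / (eta * (1 - 4 * eta * gamma)) * (F0 - F1)
     + 2 * gamma * eta / (1 - 4 * eta * gamma) * sigma ^+ 2
     + ((gamma * eta * (1 - 4 * eta * gamma))^-1 + 2) * (B + E2).
Proof.
move=> e0 g0 C0 B0 Eq0 EqE H.
set C := 1 - 4 * eta * gamma in C0 H *.
have k0 : 0 < eta * C by apply: mulr_gt0.
have H1 : Ain - (1 + 4 * gamma * eta) / C * Eq - 2 * gamma * eta / C * sigma ^+ 2
          <= 2 / (eta * C) * (F0 - F1).
  have H2 : eta * C / 2 * Ain - eta / 2 * (1 + 4 * gamma * eta) * Eq - gamma * eta ^+ 2 * sigma ^+ 2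
           <= F0 - F1 by lra.
  have := ler_wpM2l (ltW (divr_gt0 (ltr0Sn R 1) k0)) H2.
  have -> : 2 / (eta * C) * (eta * C / 2 * Ain - eta / 2 * (1 + 4 * gamma * eta) * Eq -
      gamma * eta ^+ 2 * sigma ^+ 2) = Ain - (1 + 4 * gamma * eta) / C * Eq - 2 * gamma * eta / C * sigma ^+ 2.
    field; apply/andP; split; apply/eqP; lra.
  by [].
have K1 : (1 + 4 * gamma * eta) / C <= (gamma * eta * C)^-1.
  rewrite -subr_ge0.
  have -> : (gamma * eta * C)^-1 - (1 + 4 * gamma * eta) / C
     = (1 - gamma * eta * (1 + 4 * gamma * eta)) / (gamma * eta * C).
    field; apply/and3P; split; apply/eqP; lra.
  apply: divr_ge0; last by apply: ltW; apply: mulr_gt0 => //; apply: mulr_gt0.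
  have ge0 : 0 < gamma * eta by apply: mulr_gt0.
  have ge1 : gamma * eta < 1 / 4 by rewrite /C in C0; lra.
  nra.
have Ki0 : 0 <= (gamma * eta * C)^-1 by rewrite invr_ge0; apply: ltW; apply: mulr_gt0 => //; apply: mulr_gt0.
have K2 : (1 + 4 * gamma * eta) / C * Eq <= ((gamma * eta * C)^-1 + 2) * E2.
  apply: ler_pM => //.
    apply: divr_ge0; [have : 0 < gamma * eta by apply: mulr_gt0| apply: ltW]; lra.
  lra.
have K3 : B <= ((gamma * eta * C)^-1 + 2) * B.
  rewrite -{1}(mul1r B); apply: ler_wpM2r => //; lra.
lra.
Qed.

Lemma alpha_gt0 (R : realType) N (d : 'I_N -> nat) i :
  (forall i, (0 < d i)%N) -> 0 < alpha R d i.
Proof.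
move=> d0; rewrite /alpha divr_gt0 // ltr0n //.
by rewrite (bigD1 i) //= ltn_addr.
Qed.

Lemma alpha_sum (R : realType) N (d : 'I_N -> nat) (i0 : 'I_N) :
  (forall i, (0 < d i)%N) -> \sum_i alpha R d i = 1.
Proof.
move=> d0; rewrite /alpha -mulr_suml -natr_sum divff //.
by rewrite pnatr_eq0 -lt0n (bigD1 i0) //= ltn_addr.
Qed.

Lemma alpha_sum_le1 (R : realType) N (d : 'I_N -> nat) :
  (forall i, (0 < d i)%N) -> \sum_i alpha R d i <= 1.
Proof.
move=> d0; case: (pickP (@predT 'I_N)) => [i0 _|H].
  by rewrite (alpha_sum _ i0 d0).
by rewrite big1 // => i; have := H i.
Qed.

Lemma weight_ge0 (R : realType) L N (d : 'I_N -> nat) (S : nat -> {set 'I_N}) (Ls : nat -> 'I_N -> {set 'I_L}) t i l :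
  0 <= weight R d S Ls t i l.
Proof. by rewrite /weight; case: ifP => // _; apply: divr_ge0. Qed.

Lemma weight_out (R : realType) L N (d : 'I_N -> nat) (S : nat -> {set 'I_N}) (Ls : nat -> 'I_N -> {set 'I_L}) t i l :
  i \notin S t -> weight R d S Ls t i l = 0.
Proof. by rewrite /weight => /negPf ->. Qed.

Lemma weight_sum (R : realType) L N (d : 'I_N -> nat) (S : nat -> {set 'I_N}) (Ls : nat -> 'I_N -> {set 'I_L}) t l :
  (forall i, (0 < d i)%N) -> l \in Lt S Ls t -> \sum_(i in S t) weight R d S Ls t i l = 1.
Proof.
move=> d0 /bigcupP[i0 i0S li0].
rewrite (eq_bigr (fun i => if l \in Ls t i then (d i)%:R / (\sum_(j in S t | l \in Ls t j) d j)%:R else 0)); last first.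
  by move=> i iS; rewrite /weight iS.
rewrite -big_mkcondr /= -mulr_suml -natr_sum divff //.
by rewrite pnatr_eq0 -lt0n (bigD1 i0) ?i0S ?li0 //= ltn_addr.
Qed.

Lemma dotv_sumZl (R : realType) P N (c : 'I_N -> R) (G : 'I_N -> 'rV[R]_P) h :
  dotv (\sum_i c i *: G i) h = \sum_i c i * dotv (G i) h.
Proof.
rewrite /dotv; under [RHS]eq_bigr => i _ do rewrite mulr_sumr.
rewrite [RHS]exchange_big /=; apply: eq_bigr => j _.
by rewrite summxE mulr_suml; apply: eq_bigr => i _; rewrite mxE mulrA.
Qed.

Lemma descent_glob (R : realType) P N (d : 'I_N -> nat) (f : 'I_N -> 'rV[R]_P -> R)
  (G : 'I_N -> 'rV[R]_P -> 'rV[R]_P) gamma :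
  (forall i, (0 < d i)%N) ->
  (forall i th v, is_derive th v (f i : 'rV[R]_P -> R^o) (dotv (G i th) v)) ->
  0 < gamma ->
  (forall i th th', norm2 (G i th - G i th') <= gamma * norm2 (th - th')) ->
  forall x h, fglob d f (x + h) <= fglob d f x + dotv (gradglob d G x) h + gamma / 2 * sqnorm h.
Proof.
move=> d0 fd g0 sm x h.
have sm2 : forall i th th', sqnorm (G i th - G i th') <= gamma ^+ 2 * sqnorm (th - th').
  move=> i th th'; have H := sm i th th'.
  have n0 : forall v : 'rV[R]_P, 0 <= norm2 v by move=> v; apply: sqrtr_ge0.
  have := ler_pM (n0 _) (n0 _) H H.
  rewrite mulrACA /norm2 -!expr2 !sqr_sqrtr ?sqnorm_ge0 //.
have D := fun i => descent1 (fd i) g0 (sm2 i) x h.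
rewrite /fglob /gradglob dotv_sumZl.
apply: (@le_trans _ _ (\sum_i alpha R d i * (f i x + dotv (G i x) h + gamma / 2 * sqnorm h))).
  apply: ler_sum => i _; apply: ler_wpM2l; [exact: ltW (alpha_gt0 _ i d0) | exact: D].
under eq_bigr => i _ do rewrite !mulrDr.
rewrite !big_split /= lerD2l -mulr_suml.
rewrite -[X in _ <= X]mul1r; apply: ler_wpM2r; last exact: alpha_sum_le1.
by apply: mulr_ge0; [apply: divr_ge0; [apply: ltW|] | apply: sqnorm_ge0].
Qed.

Lemma coord_ineq (R : realType) (a u eta gamma : R) : 0 < eta -> 0 < gamma ->
  - eta * (a * u) + gamma * eta ^+ 2 * u ^+ 2
  <= - (eta * (1 - 4 * eta * gamma) / 2) * a ^+ 2 + eta / 2 * (1 + 4 * gamma * eta) * (u - a) ^+ 2.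
Proof.
move=> e0 g0.
have X : 0 <= eta / 2 * u ^+ 2 by apply: mulr_ge0; [lra | apply: sqr_ge0].
have Y : 0 <= gamma * eta ^+ 2 * (2 * a - u) ^+ 2.
  by apply: mulr_ge0; [apply: mulr_ge0; [lra | apply: sqr_ge0] | apply: sqr_ge0].
have E : - (eta * (1 - 4 * eta * gamma) / 2) * a ^+ 2 + eta / 2 * (1 + 4 * gamma * eta) * (u - a) ^+ 2
   - (- eta * (a * u) + gamma * eta ^+ 2 * u ^+ 2)
   = eta / 2 * u ^+ 2 + gamma * eta ^+ 2 * (2 * a - u) ^+ 2 by field.
rewrite -subr_ge0 E; lra.
Qed.

Lemma sum_lin (R : realType) (I : finType) (q a b : I -> R) (c k1 k2 : R) :
  \sum_x q x * (c - k1 * a x + k2 * b x)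
  = c * \sum_x q x - k1 * \sum_x q x * a x + k2 * \sum_x q x * b x.
Proof.
rewrite !mulr_sumr -sumrB -big_split /=; apply: eq_bigr => x _; ring.
Qed.

Lemma dotvNZr (R : realType) P (u v : 'rV[R]_P) (c : R) :
  dotv u (- (c *: v)) = - (c * dotv u v).
Proof.
rewrite /dotv mulr_sumr -sumrN; apply: eq_bigr => j _; rewrite !mxE; ring.
Qed.

Lemma sqnormNZ (R : realType) P (v : 'rV[R]_P) (c : R) :
  sqnorm (- (c *: v)) = c ^+ 2 * sqnorm v.
Proof.
rewrite /sqnorm mulr_sumr; apply: eq_bigr => j _; rewrite !mxE; ring.
Qed.

Lemma per_step (R : realType) (P L N : nat) (X : finType) (layer : 'I_P -> 'I_L) (d : 'I_N -> nat)
  (f : 'I_N -> 'rV[R]_P -> R) (G : 'I_N -> 'rV[R]_P -> 'rV[R]_P)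
  (g : 'I_N -> X -> 'rV[R]_P -> 'rV[R]_P) (p : 'I_N -> X -> R)
  (S : nat -> {set 'I_N}) (Ls : nat -> 'I_N -> {set 'I_L})
  (eta gamma sigma : R) (sigmal kappa : 'I_L -> R) (t : nat) (th : 'rV[R]_P) :
  (forall i, (0 < d i)%N) ->
  (forall x h, fglob d f (x + h) <= fglob d f x + dotv (gradglob d G x) h + gamma / 2 * sqnorm h) ->
  (forall i xi, 0 <= p i xi) -> (forall i, \sum_(xi : X) p i xi = 1) ->
  0 < eta -> 0 < gamma ->
  (forall i l th, \sum_(xi : X) p i xi *: layer_mask layer l (g i xi th)
                  = layer_mask layer l (G i th)) ->
  (forall i l th xi, 0 < p i xi ->
     sqnorm (layer_mask layer l (g i xi th) - layer_mask layer l (G i th)) <= sigmal l ^+ 2) ->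
  \sum_(l in Lt S Ls t) sigmal l ^+ 2 <= sigma ^+ 2 ->
  (forall i l th,
     sqnorm (layer_mask layer l (gradglob d G th) - layer_mask layer l (G i th)) <= kappa l ^+ 2) ->
  0 < 1 - 4 * eta * gamma ->
  sqnorm (gradglob d G th) <=
    2 / (eta * (1 - 4 * eta * gamma)) * (fglob d f th -
       \sum_(xs : {ffun 'I_N -> X}) (\prod_(i < N) p i (xs i)) * fglob d f (step layer d S Ls g eta t th xs))
    + 2 * gamma * eta / (1 - 4 * eta * gamma) * sigma ^+ 2
    + ((gamma * eta * (1 - 4 * eta * gamma))^-1 + 2) *
      (sqnorm (\sum_(l in ~: Lt S Ls t) layer_mask layer l (gradglob d G th))
       + \sum_(l in Lt S Ls t) chi R d S Ls t l * kappa l ^+ 2).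
Proof.
move=> d0 desc p0 p1 e0 g0 unb var sig kap C0.
set A := Lt S Ls t.
set w := fun i l => weight R d S Ls t i l.
set Gf := gradglob d G th.
set u := \sum_(l in A) \sum_(i in S t) w i l *: layer_mask layer l (G i th).
set v := fun xs : {ffun 'I_N -> X} =>
  \sum_(l in A) \sum_(i in S t) w i l *: layer_mask layer l (g i (xs i) th).
set pi := fun xs : {ffun 'I_N -> X} => \prod_(i < N) p i (xs i).
have stepE : forall xs, step layer d S Ls g eta t th xs = th + - (eta *: v xs) by [].
have w0 : forall i l, 0 <= w i l by move=> i l; exact: weight_ge0.
have w1 : forall l, l \in A -> \sum_(i in S t) w i l = 1 by move=> l lA; exact: weight_sum.
have wS : forall i l, i \notin S t -> w i l = 0 by move=> i l iS; exact: weight_out.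
have pi0 : forall xs, 0 <= pi xs by move=> xs; exact: pi_ge0.
have pi1 : \sum_xs pi xs = 1 by exact: pi_sum1.
have Ev : forall j, \sum_xs pi xs * v xs 0 j = u 0 j.
  move=> j; rewrite /u step_coord.
  under eq_bigr => xs _ do rewrite /v step_coord.
  case: ifP => jA; last by rewrite big1 // => xs _; rewrite mulr0.
  under eq_bigr => xs _ do rewrite mulr_sumr.
  rewrite exchange_big /=; apply: eq_bigr => i _.
  under eq_bigr => xs _ do rewrite mulrCA.
  rewrite -mulr_sumr; congr (_ * _).
  have M := marginal (p := p) i (fun x => g i x th 0 j) p1; simpl in M; rewrite M.
  have := congr1 (fun M : 'rV[R]_P => M 0 j) (unb i (layer j) th); rewrite /= summxE !mxE eqxx => <-.
  by apply: eq_bigr => x _; rewrite !mxE eqxx.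
have Edot : \sum_xs pi xs * dotv Gf (v xs) = dotv Gf u.
  rewrite /dotv; under eq_bigr => xs _ do rewrite mulr_sumr.
  rewrite exchange_big /=; apply: eq_bigr => j _; rewrite -Ev mulr_sumr.
  by apply: eq_bigr => xs _; rewrite mulrCA.
have Evar : \sum_xs pi xs * sqnorm (v xs) <= 2 * sqnorm u + 2 * sigma ^+ 2.
  apply: (@le_trans _ _ (\sum_xs pi xs * (2 * sqnorm u + 2 * sigma ^+ 2))); last first.
    by rewrite -mulr_suml pi1 mul1r.
  apply: ler_sum => xs _.
  case: (eqVneq (pi xs) 0) => [->|nz]; first by rewrite !mul0r.
  apply: ler_wpM2l => //.
  apply: le_trans (sqnorm_split2 (v xs) u) _; rewrite lerD2l; apply: ler_wpM2l => //.
  apply: le_trans sig.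
  apply: (var_bound (w := w) (y := fun i => g i (xs i) th) (z := fun i => G i th)
            (s2 := fun l => sigmal l ^+ 2)) => //.
  by move=> i l _; apply: var; exact: pi_pos.
have Edesc : \sum_xs pi xs * fglob d f (step layer d S Ls g eta t th xs)
   <= fglob d f th - eta * dotv Gf u + gamma * eta ^+ 2 * (sqnorm u + sigma ^+ 2).
  apply: (@le_trans _ _ (\sum_xs pi xs * (fglob d f th - eta * dotv Gf (v xs)
                          + gamma / 2 * eta ^+ 2 * sqnorm (v xs)))).
    apply: ler_sum => xs _; apply: ler_wpM2l => //.
    by rewrite stepE; apply: le_trans (desc _ _) _; rewrite dotvNZr sqnormNZ; lra.
  rewrite sum_lin pi1 mulr1 Edot.
  have H : gamma / 2 * eta ^+ 2 * (\sum_xs pi xs * sqnorm (v xs))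
           <= gamma / 2 * eta ^+ 2 * (2 * sqnorm u + 2 * sigma ^+ 2).
    apply: ler_wpM2l => //; apply: mulr_ge0; [lra | apply: sqr_ge0].
  lra.
set Ain := \sum_(j < P) (if layer j \in A then Gf 0 j ^+ 2 else 0).
set Eq := \sum_(j < P) (if layer j \in A then (u 0 j - Gf 0 j) ^+ 2 else 0).
set B := sqnorm (\sum_(l in ~: A) layer_mask layer l Gf).
have u0 : forall j, layer j \notin A -> u 0 j = 0.
  by move=> j /negPf jA; rewrite /u step_coord jA.
have HB : B = \sum_(j < P) (if layer j \in A then 0 else Gf 0 j ^+ 2).
  rewrite /B sqnormE; apply: eq_bigr => j _.
  have := sum_mask_coord layer (~: A) (fun _ => Gf) j; rewrite /= => ->.
  by rewrite finset.in_setC; case: (layer j \in A) => /=; rewrite ?expr0n.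
have Hsq : sqnorm Gf = Ain + B.
  rewrite HB /Ain -big_split /=; apply: eq_bigr => j _.
  by case: ifP; rewrite ?addr0 ?add0r.
have Hcoord : - eta * dotv Gf u + gamma * eta ^+ 2 * sqnorm u
   <= - (eta * (1 - 4 * eta * gamma) / 2) * Ain + eta / 2 * (1 + 4 * gamma * eta) * Eq.
  have L1 : - eta * dotv Gf u + gamma * eta ^+ 2 * sqnorm u
     = \sum_(j < P) (- eta * (Gf 0 j * u 0 j) + gamma * eta ^+ 2 * u 0 j ^+ 2).
    by rewrite /dotv /sqnorm !mulr_sumr -big_split.
  have R1 : - (eta * (1 - 4 * eta * gamma) / 2) * Ain + eta / 2 * (1 + 4 * gamma * eta) * Eq
     = \sum_(j < P) (if layer j \in A then
          - (eta * (1 - 4 * eta * gamma) / 2) * Gf 0 j ^+ 2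
          + eta / 2 * (1 + 4 * gamma * eta) * (u 0 j - Gf 0 j) ^+ 2 else 0).
    rewrite /Ain /Eq !mulr_sumr -big_split /=; apply: eq_bigr => j _.
    by case: ifP => _; rewrite ?mulr0 ?addr0.
  rewrite L1 R1; apply: ler_sum => j _; case: ifP => jA.
    exact: coord_ineq.
  by rewrite u0 ?jA // mulr0 expr0n /= !mulr0 addr0.
have HEq : Eq <= \sum_(l in A) chi R d S Ls t l * kappa l ^+ 2.
  apply: (cs_bound (w := w) (al := alpha R d) (G := fun i => G i th) (Gf := Gf)
            (ka := kappa)) => //.
  - by move=> i; exact: alpha_gt0.
  - by move=> l /bigcupP[i0 _ _]; exact: alpha_sum.
  - by move=> i l; apply: kap.
have Eq0 : 0 <= Eq by apply: sumr_ge0 => j _; case: ifP => _ //; apply: sqr_ge0.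
have B0 : 0 <= B by apply: sqnorm_ge0.
move: Edesc; rewrite /pi => Edesc.
rewrite Hsq; apply: (@final_arith R eta gamma sigma Ain B Eq) => //.
apply: le_trans Edesc _; lra.
Qed.

Lemma sum_comb (R : realType) (I : finType) (q x1 x2 x3 : I -> R) (a b c e : R) :
  \sum_i q i * (a * (x1 i - x2 i) + b + c * (x3 i + e))
  = a * (\sum_i q i * x1 i - \sum_i q i * x2 i) + b * \sum_i q i + c * (\sum_i q i * x3 i + e * \sum_i q i).
Proof.
have -> : a * (\sum_i q i * x1 i - \sum_i q i * x2 i) = \sum_i a * (q i * x1 i - q i * x2 i).
  by rewrite -mulr_sumr sumrB.
have -> : c * (\sum_i q i * x3 i + e * \sum_i q i) = \sum_i c * (q i * x3 i + e * q i).
  by rewrite -mulr_sumr big_split /= mulr_sumr.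
rewrite mulr_sumr -!big_split /=; apply: eq_bigr => i _; ring.
Qed.

Lemma E_comb (R : realType) P L N (X : finType) (layer : 'I_P -> 'I_L) (d : 'I_N -> nat)
  (S : nat -> {set 'I_N}) (Ls : nat -> 'I_N -> {set 'I_L}) (g : 'I_N -> X -> 'rV[R]_P -> 'rV[R]_P)
  (p : 'I_N -> X -> R) eta (h1 h2 h3 : 'rV[R]_P -> R) (a b c e : R) k s th :
  (forall i, \sum_(x : X) p i x = 1) ->
  expect_from layer d S Ls g p eta s k (fun th => a * (h1 th - h2 th) + b + c * (h3 th + e)) th
  = a * (expect_from layer d S Ls g p eta s k h1 th - expect_from layer d S Ls g p eta s k h2 th)
    + b + c * (expect_from layer d S Ls g p eta s k h3 th + e).
Proof.
move=> p1; elim: k s th => [|k IH] s th //=.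
under eq_bigr => xs _ do rewrite IH.
by rewrite sum_comb pi_sum1 // !mulr1.
Qed.

Lemma tele (R : realType) (F : nat -> R) T : \sum_(t < T) (F t - F t.+1) = F 0%N - F T.
Proof.
elim: T => [|T IH]; first by rewrite big_ord0 subrr.
by rewrite big_ord_recr /= IH; ring.
Qed.

Theorem theorem1 (R : realType) (P L N : nat) (X : finType)
  (layer : 'I_P -> 'I_L) (d : 'I_N -> nat)
  (f : 'I_N -> 'rV[R]_P -> R) (G : 'I_N -> 'rV[R]_P -> 'rV[R]_P)
  (g : 'I_N -> X -> 'rV[R]_P -> 'rV[R]_P) (p : 'I_N -> X -> R)
  (S : nat -> {set 'I_N}) (Ls : nat -> 'I_N -> {set 'I_L})
  (theta0 thetastar : 'rV[R]_P) (eta gamma sigma : R)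
  (sigmal kappa : 'I_L -> R) (T : nat) :
  (* datasets are nonempty *)
  (forall i, (0 < d i)%N) ->
  (* G i is the gradient of f i *)
  (forall i th v, is_derive th v (f i : 'rV[R]_P -> R^o) (dotv (G i th) v)) ->
  (* thetastar is a global minimizer of f *)
  (forall th, fglob d f thetastar <= fglob d f th) ->
  (* p i is a probability mass function of the mini-batch of client i *)
  (forall i xi, 0 <= p i xi) -> (forall i, \sum_(xi : X) p i xi = 1) ->
  0 < eta ->
  (* (i) gamma-smoothness *)
  0 < gamma ->
  (forall i th th', norm2 (G i th - G i th') <= gamma * norm2 (th - th')) ->
  (* (ii) unbiasedness and bounded variance *)
  (forall i l th, \sum_(xi : X) p i xi *: layer_mask layer l (g i xi th)
                  = layer_mask layer l (G i th)) ->
  (forall l, 0 < sigmal l) ->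
  (forall i l th xi, 0 < p i xi ->
     sqnorm (layer_mask layer l (g i xi th) - layer_mask layer l (G i th))
       <= sigmal l ^+ 2) ->
  (forall t, \sum_(l in Lt S Ls t) sigmal l ^+ 2 <= sigma ^+ 2) ->
  (* (iii) gradient diversity *)
  (forall l, 0 < kappa l) ->
  (forall i l th,
     sqnorm (layer_mask layer l (gradglob d G th) - layer_mask layer l (G i th))
       <= kappa l ^+ 2) ->
  0 < 1 - 4 * eta * gamma ->
  (0 < T)%N ->
  let C := 1 - 4 * eta * gamma in
  let Egrad t := expect_at layer d S Ls g p eta theta0 t
                   (fun th => sqnorm (gradglob d G th)) in
  let E1 t := expect_at layer d S Ls g p eta theta0 t
                (fun th => sqnorm (\sum_(l in ~: Lt S Ls t)
                                     layer_mask layer l (gradglob d G th))) in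
  let E2 t := \sum_(l in Lt S Ls t) chi R d S Ls t l * kappa l ^+ 2 in
  \big[Num.min/Egrad 0%N]_(t < T) Egrad t
    <= 2 / (eta * C * T%:R) * (fglob d f theta0 - fglob d f thetastar)
       + 2 * gamma * eta / C * sigma ^+ 2
       + T%:R^-1 * \sum_(t < T) ((gamma * eta * C)^-1 + 2) * (E1 t + E2 t).
Proof.
move=> d0 fd fmin p0 p1 e0 g0 sm unb sl0 var sig k0 kap C0 T0.
pose C := 1 - 4 * eta * gamma.
pose Egrad t := expect_at layer d S Ls g p eta theta0 t
                   (fun th => sqnorm (gradglob d G th)).
pose E1 t := expect_at layer d S Ls g p eta theta0 t
                (fun th => sqnorm (\sum_(l in ~: Lt S Ls t)
                                     layer_mask layer l (gradglob d G th))).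
pose E2 t := \sum_(l in Lt S Ls t) chi R d S Ls t l * kappa l ^+ 2.
change (\big[Num.min/Egrad 0%N]_(t < T) Egrad t
    <= 2 / (eta * C * T%:R) * (fglob d f theta0 - fglob d f thetastar)
       + 2 * gamma * eta / C * sigma ^+ 2
       + T%:R^-1 * \sum_(t < T) ((gamma * eta * C)^-1 + 2) * (E1 t + E2 t)).
have desc := descent_glob d0 fd g0 sm.
set K := (gamma * eta * C)^-1 + 2.
set Ef := fun t => expect_at layer d S Ls g p eta theta0 t (fglob d f).
have key : forall t, Egrad t <= 2 / (eta * C) * (Ef t - Ef t.+1)
                        + 2 * gamma * eta / C * sigma ^+ 2 + K * (E1 t + E2 t).
  move=> t.
  apply: (@le_trans _ _ (expect_from layer d S Ls g p eta 0 t (fun th =>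
      2 / (eta * C) * (fglob d f th - \sum_(xs : {ffun 'I_N -> X}) (\prod_(i < N) p i (xs i))
            * fglob d f (step layer d S Ls g eta t th xs))
      + 2 * gamma * eta / C * sigma ^+ 2
      + K * (sqnorm (\sum_(l in ~: Lt S Ls t) layer_mask layer l (gradglob d G th)) + E2 t)) theta0)).
    apply: E_le => // th; exact: (@per_step R P L N X layer d f G g p S Ls eta gamma sigma sigmal kappa t th d0 desc p0 p1 e0 g0 unb var (sig t) kap C0).
  by rewrite E_comb // /Ef /expect_at E_succ.
have sumkey : \sum_(t < T) Egrad t <= 2 / (eta * C) * (Ef 0%N - Ef T)
      + T%:R * (2 * gamma * eta / C * sigma ^+ 2) + \sum_(t < T) K * (E1 t + E2 t).
  apply: (@le_trans _ _ (\sum_(t < T) (2 / (eta * C) * (Ef t - Ef t.+1) + 2 * gamma * eta / C * sigma ^+ 2 + K * (E1 t + E2 t)))).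
    by apply: ler_sum => t _; exact: key.
  rewrite !big_split /= -mulr_sumr sumr_const card_ord tele (mulr_natl (2 * gamma * eta / C * sigma ^+ 2) T).
  by [].
have EfT : fglob d f thetastar <= Ef T.
  rewrite /Ef /expect_at.
  rewrite -[X in X <= _](@E_const R P L N X layer d S Ls g p eta (fglob d f thetastar) T 0 theta0 p1).
  by apply: E_le.
have hmin : forall t0 : 'I_T, \big[Num.min/Egrad 0%N]_(t < T) Egrad t <= Egrad t0.
  by move=> t0; rewrite (bigD1 t0) //= ge_min lexx.
set m := \big[Num.min/Egrad 0%N]_(t < T) Egrad t.
have Tm : T%:R * m <= \sum_(t < T) Egrad t.
  apply: (@le_trans _ _ (\sum_(t < T) m)); first by rewrite sumr_const card_ord mulr_natl.
  by apply: ler_sum => t _; exact: hmin.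
have Tpos : 0 < T%:R :> R by rewrite ltr0n.
have Cpos : 0 < eta * C by apply: mulr_gt0.
have c1pos : 0 <= 2 / (eta * C) by apply: divr_ge0 => //; apply: ltW.
have H1 : 2 / (eta * C) * (Ef 0%N - Ef T) <= 2 / (eta * C) * (fglob d f theta0 - fglob d f thetastar).
  by apply: ler_wpM2l => //; have -> : Ef 0%N = fglob d f theta0 by []; lra.
set SS := \sum_(t < T) K * (E1 t + E2 t).
rewrite -(ler_pM2l Tpos).
have -> : T%:R * (2 / (eta * C * T%:R) * (fglob d f theta0 - fglob d f thetastar) +
     2 * gamma * eta / C * sigma ^+ 2 + T%:R^-1 * SS)
   = 2 / (eta * C) * (fglob d f theta0 - fglob d f thetastar) + T%:R * (2 * gamma * eta / C * sigma ^+ 2) + SS.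
  field; apply/and3P; split; apply/eqP; rewrite /C; lra.
apply: le_trans Tm _; apply: le_trans sumkey _; rewrite /SS; lra.
Qed.
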